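(* Let $x_0,y_0$ be positive integers and let $\{(X_t,Y_t)\}_{t\ge 0}$ be the CA competition process with fitness ratio $r=1$ started at $(x_0,y_0)$. Let $N=\sum_{t=0}^\infty \mathbf{1}\{X_t=Y_t\}$ be the total number of ties. Then, as $n\to\infty$, \[ \mathbb{P}[N\ge n]\sim \frac{1}{2^{x_0+y_0-2}\,B(x_0,y_0)}\, n^{-1}, \] where $B(x,y)=\int_0^1 s^{x-1}(1-s)^{y-1}\,ds$ is the beta function.
   Context: The CA competition process with fitness ratio $r\ge 1$ started at $(x_0,y_0)$ is the discrete-time Markov chain $\{(X_t,Y_t)\}_{t\ge0}$ on $\{(x,y)\in\mathbb{Z}^2: x\ge1,y\ge1\}$ with $(X_0,Y_0)=(x_0,y_0)$ and transition probabilities: from $(x,y)$ it moves to $(x+1,y)$ with probability $\frac{rx}{rx+y}$ and to $(x,y+1)$ with probability $\frac{y}{rx+y}$. The notation $f(n)\sim g(n)$ means $\lim_{n\to\infty} f(n)/g(n)=1$. *)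

(* Defs.v *)
From Stdlib Require Import Reals Lra Lia.
From Coquelicot Require Import Coquelicot.
Open Scope R_scope.

Definition tie (x y : nat) : nat := if Nat.eqb x y then 1%nat else 0%nat.

(* ties_ge_prob r T x y k = P[ #{ t in 0..T : X_t = Y_t } >= k ] for the CA
   competition process with fitness ratio r started at (x,y). *)
Fixpoint ties_ge_prob (r : R) (T x y k : nat) : R :=
  match T with
  | O => if (k <=? tie x y)%nat then 1 else 0
  | S T' =>
      let k' := (k - tie x y)%nat in
      let px := r * INR x / (r * INR x + INR y) in
      let py := INR y / (r * INR x + INR y) in
      px * ties_ge_prob r T' (S x) y k' + py * ties_ge_prob r T' x (S y) k'
  end.

(* P[N >= n] where N = total number of ties over all times t >= 0:
   by continuity from below of the probability measure, it is the limit as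
   T -> oo of the (nondecreasing) finite-horizon probabilities. *)
Definition prob_N_ge (r : R) (x0 y0 n : nat) : R :=
  real (Lim_seq (fun T => ties_ge_prob r T x0 y0 n)).

Definition Beta (a b : nat) : R :=
  RInt (fun s => s ^ (a - 1) * (1 - s) ^ (b - 1)) 0 1.

(* Main.v *)
Require Import Defs.
From Stdlib Require Import Reals Lra Lia ZArith.
From Coquelicot Require Import Coquelicot.
Open Scope R_scope.


Definition tz (d : Z) : nat := if Z.eqb d 0 then 1%nat else 0%nat.

Fixpoint Wf (s : R) (T : nat) (d : Z) (k : nat) : R :=
  match T with
  | O => if (k <=? tz d)%nat then 1 else 0
  | S T' => s * Wf s T' (d + 1)%Z (k - tz d) + (1 - s) * Wf s T' (d - 1)%Z (k - tz d)
  end.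

Lemma Wf_k0 s T d : Wf s T d 0 = 1.
Proof.
  revert d; induction T as [|T IH]; intro d; simpl.
  - reflexivity.
  - rewrite !IH. ring.
Qed.

Lemma Wf_bounds s T d k : 0 <= s <= 1 -> 0 <= Wf s T d k <= 1.
Proof.
  intro Hs; revert d k; induction T as [|T IH]; intros d k; simpl.
  - destruct (k <=? tz d)%nat; lra.
  - destruct (IH (d+1)%Z (k - tz d)%nat); destruct (IH (d-1)%Z (k - tz d)%nat); nra.
Qed.

Lemma Wf_mono s T d k : 0 <= s <= 1 -> Wf s T d k <= Wf s (S T) d k.
Proof.
  intro Hs; revert d k; induction T as [|T IH]; intros d k.
  - simpl. destruct (k <=? tz d)%nat eqn:E.
    + assert (k - tz d = 0)%nat as -> by (apply Nat.leb_le in E; lia).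
      simpl. lra.
    + pose proof (Wf_bounds s 1 d k Hs). simpl in H. lra.
  - change (Wf s (S T) d k) with (s * Wf s T (d + 1)%Z (k - tz d) + (1 - s) * Wf s T (d - 1)%Z (k - tz d)).
    change (Wf s (S (S T)) d k) with (s * Wf s (S T) (d + 1)%Z (k - tz d) + (1 - s) * Wf s (S T) (d - 1)%Z (k - tz d)).
    pose proof (IH (d+1)%Z (k - tz d)%nat); pose proof (IH (d-1)%Z (k - tz d)%nat); nra.
Qed.

Lemma Wf_sym s T d k : Wf (1 - s) T (- d) k = Wf s T d k.
Proof.
  revert d k; induction T as [|T IH]; intros d k; simpl.
  - unfold tz. replace (Z.eqb (-d) 0) with (Z.eqb d 0) by (destruct (Z.eqb_spec d 0); destruct (Z.eqb_spec (-d) 0); lia). reflexivity.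
  - assert (tz (-d) = tz d) as -> by (unfold tz; destruct (Z.eqb_spec d 0); destruct (Z.eqb_spec (-d) 0); lia).
    replace (- d + 1)%Z with (- (d - 1))%Z by lia.
    replace (- d - 1)%Z with (- (d + 1))%Z by lia.
    rewrite !IH. ring.
Qed.

Definition Cts (f : R -> R) := forall z, continuous f z.
Lemma Cts_const c : Cts (fun _ => c).
Proof. intro z; apply continuous_const. Qed.
Lemma Cts_id : Cts (fun x => x).
Proof. intro z; apply continuous_id. Qed.
Lemma Cts_plus f g : Cts f -> Cts g -> Cts (fun x => f x + g x).
Proof. intros Hf Hg z; apply (continuous_plus f g); auto. Qed.
Lemma Cts_mult f g : Cts f -> Cts g -> Cts (fun x => f x * g x).
Proof. intros Hf Hg z; apply (continuous_mult f g); auto. Qed.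
Lemma Cts_opp f : Cts f -> Cts (fun x => - f x).
Proof. intros Hf z; apply (continuous_opp f); auto. Qed.
Lemma Cts_minus f g : Cts f -> Cts g -> Cts (fun x => f x - g x).
Proof. intros Hf Hg. unfold Rminus. apply Cts_plus; auto. apply Cts_opp; auto. Qed.
Lemma Cts_pow f n : Cts f -> Cts (fun x => f x ^ n).
Proof.
  intro Hf; induction n as [|n IH]; simpl.
  - apply Cts_const.
  - apply Cts_mult; auto.
Qed.
Lemma Cts_abs f : Cts f -> Cts (fun x => Rabs (f x)).
Proof. intros Hf z; apply continuous_Rabs_comp; auto. Qed.
Lemma Cts_RInt f a b : Cts f -> ex_RInt f a b.
Proof. intro Hf; apply (ex_RInt_continuous (V:=R_CompleteNormedModule)); intros; apply Hf. Qed.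

Lemma Wf_cts T d k : Cts (fun s => Wf s T d k).
Proof.
  revert d k; induction T as [|T IH]; intros d k; simpl.
  - apply Cts_const.
  - apply Cts_plus; apply Cts_mult; auto using Cts_id, Cts_const, Cts_minus.
Qed.


Lemma pow_le1 x n : 0 <= x <= 1 -> x ^ n <= 1.
Proof.
  intro H; induction n as [|n IH]; simpl; [lra|].
  pose proof (pow_le x n (proj1 H)). nra.
Qed.

Lemma abs_nat_opp d : Z.abs_nat (- d) = Z.abs_nat d.
Proof. rewrite !Zabs2Nat.abs_nat_spec, Z.abs_opp. reflexivity. Qed.

Definition rp (s : R) (m : nat) : R :=
  if Rle_dec s (1/2) then 1 else ((1 - s) / s) ^ m.
Definition rho (s : R) (d : Z) : R :=
  if Z_lt_dec d 0 then rp (1 - s) (Z.abs_nat d) else rp s (Z.abs_nat d).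
Definition qq (s : R) : R := s * rho s 1 + (1 - s) * rho s (-1).

Lemma rp_bounds s m : 0 <= s <= 1 -> 0 <= rp s m <= 1.
Proof.
  intro Hs; unfold rp; destruct (Rle_dec s (1/2)); [lra|].
  assert (0 <= (1-s)/s <= 1).
  { split. apply Rmult_le_pos; [lra|]. apply Rlt_le, Rinv_0_lt_compat; lra.
    apply Rmult_le_reg_r with s; [lra|]. unfold Rdiv. rewrite Rmult_assoc, Rinv_l; lra. }
  split. apply pow_le; lra. apply pow_le1; lra.
Qed.

Lemma rho_bounds s d : 0 <= s <= 1 -> 0 <= rho s d <= 1.
Proof. intro Hs; unfold rho; destruct (Z_lt_dec d 0); apply rp_bounds; lra. Qed.

Lemma rp_0 s : rp s 0 = 1.
Proof. unfold rp; destruct (Rle_dec s (1/2)); simpl; auto. Qed.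

Lemma rho_0 s : rho s 0 = 1.
Proof. unfold rho; destruct (Z_lt_dec 0 0); [lia|]. apply rp_0. Qed.

Lemma rho_sym s d : rho (1 - s) (- d) = rho s d.
Proof.
  unfold rho. destruct (Z_lt_dec (-d) 0); destruct (Z_lt_dec d 0); try lia.
  - replace (1 - (1 - s)) with s by ring. rewrite abs_nat_opp. reflexivity.
  - rewrite abs_nat_opp. reflexivity.
  - assert (d = 0%Z) by lia. subst. simpl. rewrite !rp_0. reflexivity.
Qed.

Lemma rho_pos s n : rho s (Z.of_nat n) = rp s n.
Proof.
  unfold rho; destruct (Z_lt_dec (Z.of_nat n) 0); [lia|]. rewrite Zabs2Nat.id. reflexivity.
Qed.

Lemma rp_harm s m : 0 <= s <= 1 ->
  s * rp s (S (S m)) + (1 - s) * rp s m = rp s (S m).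
Proof.
  intro Hs; unfold rp; destruct (Rle_dec s (1/2)); [ring|].
  simpl. field. lra.
Qed.

Lemma rho_harm_pos s d : 0 <= s <= 1 -> (0 < d)%Z ->
  s * rho s (d + 1) + (1 - s) * rho s (d - 1) = rho s d.
Proof.
  intros Hs Hd. destruct (Z_of_nat_complete_inf (d - 1)) as [m Hm]; [lia|].
  replace (d + 1)%Z with (Z.of_nat (S (S m))) by lia.
  replace (d - 1)%Z with (Z.of_nat m) by lia.
  replace d with (Z.of_nat (S m)) by lia.
  rewrite !rho_pos. apply rp_harm; auto.
Qed.

Lemma rho_harm s d : 0 <= s <= 1 -> d <> 0%Z ->
  s * rho s (d + 1) + (1 - s) * rho s (d - 1) = rho s d.
Proof.
  intros Hs Hd. destruct (Z_lt_dec 0 d). apply rho_harm_pos; auto.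
  rewrite <- (rho_sym s (d+1)), <- (rho_sym s (d-1)), <- (rho_sym s d).
  replace (- (d+1))%Z with (-d - 1)%Z by lia.
  replace (- (d-1))%Z with (-d + 1)%Z by lia.
  rewrite <- (rho_harm_pos (1-s) (-d)); [ring|lra|lia].
Qed.

Lemma qq_bounds s : 0 <= s <= 1 -> 0 <= qq s <= 1.
Proof.
  intro Hs; unfold qq. pose proof (rho_bounds s 1 Hs); pose proof (rho_bounds s (-1) Hs). nra.
Qed.

Definition U (s : R) (d : Z) (k : nat) : R :=
  match k with O => 1 | S k1 => rho s d * qq s ^ k1 end.

Lemma Wf_upper s T d k : 0 <= s <= 1 -> Wf s T d k <= U s d k.
Proof.
  intro Hs; revert d k; induction T as [|T IH]; intros d k.
  - destruct k as [|k].
    + simpl. lra.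
    + simpl. unfold tz. destruct (Z.eqb_spec d 0).
      * subst. destruct k; simpl. rewrite rho_0; lra.
        pose proof (rho_bounds s 0 Hs); pose proof (pow_le (qq s) (S k) (proj1 (qq_bounds s Hs))). simpl in *; nra.
      * simpl. pose proof (rho_bounds s d Hs); pose proof (pow_le (qq s) k (proj1 (qq_bounds s Hs))). nra.
  - destruct k as [|k].
    + simpl. pose proof (Wf_bounds s (S T) d 0 Hs). simpl in H. simpl. lra.
    + change (Wf s (S T) d (S k)) with (s * Wf s T (d + 1)%Z (S k - tz d) + (1 - s) * Wf s T (d - 1)%Z (S k - tz d)).
      unfold tz. destruct (Z.eqb_spec d 0).
      * subst. replace (S k - 1)%nat with k by lia.
        replace (0 + 1)%Z with 1%Z by lia. replace (0 - 1)%Z with (-1)%Z by lia.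
        pose proof (IH 1%Z k) as H1; pose proof (IH (-1)%Z k) as H2.
        destruct k as [|k].
        -- simpl U in *. rewrite rho_0. nra.
        -- simpl U in *. rewrite rho_0.
           assert (s * Wf s T 1 (S k) <= s * (rho s 1 * qq s ^ k)) by (apply Rmult_le_compat_l; lra).
           assert ((1-s) * Wf s T (-1) (S k) <= (1-s) * (rho s (-1) * qq s ^ k)) by (apply Rmult_le_compat_l; lra).
           replace (1 * (qq s * qq s ^ k)) with (s * (rho s 1 * qq s ^ k) + (1 - s) * (rho s (-1) * qq s ^ k)) by (unfold qq; ring). lra.
      * replace (S k - 0)%nat with (S k) by lia. simpl U.
        pose proof (IH (d+1)%Z (S k)); pose proof (IH (d-1)%Z (S k)). simpl U in *.
        rewrite <- (rho_harm s d Hs n).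
        pose proof (pow_le (qq s) k (proj1 (qq_bounds s Hs))). nra.
Qed.


Section Lower.
Variable s : R.
Hypothesis Hs : 0 <= s <= 1.
Variable M : nat.
Hypothesis HM : (1 <= M)%nat.

Definition aa (s : R) (M : nat) (d : Z) : R :=
  if Z_lt_dec (Z.abs d) (Z.of_nat M) then rho s d * (1 - IZR (Z.abs d) / INR M) else 0.
Definition QQ (s : R) (M : nat) : R := (1 - 1 / INR M) * qq s.
Definition hh (s : R) (M : nat) (d : Z) (k : nat) : R :=
  match k with O => 1 | S k1 => aa s M d * QQ s M ^ k1 end.
Fixpoint vv (s : R) (M : nat) (T : nat) (d : Z) : R :=
  match T with
  | O => if Z_lt_dec (Z.abs d) (Z.of_nat M) then 1 else 0
  | S T' => if Z_lt_dec (Z.abs d) (Z.of_nat M)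
            then s * vv s M T' (d + 1) + (1 - s) * vv s M T' (d - 1) else 0
  end.

Lemma INR_M_pos : 0 < INR M.
Proof. apply lt_0_INR; lia. Qed.

Lemma aa_formula d : (Z.abs d <= Z.of_nat M)%Z -> aa s M d = rho s d * (1 - IZR (Z.abs d) / INR M).
Proof.
  intro H; unfold aa; destruct (Z_lt_dec (Z.abs d) (Z.of_nat M)); [reflexivity|].
  assert (Z.abs d = Z.of_nat M) as -> by lia. rewrite <- INR_IZR_INZ.
  pose proof INR_M_pos. field_simplify; lra.
Qed.

Lemma aa_bounds d : 0 <= aa s M d <= 1.
Proof.
  unfold aa; destruct (Z_lt_dec (Z.abs d) (Z.of_nat M)); [|lra].
  pose proof (rho_bounds s d Hs). pose proof INR_M_pos.
  assert (0 <= IZR (Z.abs d) / INR M <= 1).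
  { split. apply Rmult_le_pos. apply IZR_le; lia. apply Rlt_le, Rinv_0_lt_compat; lra.
    apply Rmult_le_reg_r with (INR M); [lra|]. unfold Rdiv. rewrite Rmult_assoc, Rinv_l by lra.
    rewrite Rmult_1_r, Rmult_1_l, INR_IZR_INZ. apply IZR_le; lia. }
  nra.
Qed.

Lemma QQ_bounds : 0 <= QQ s M <= 1.
Proof.
  unfold QQ. pose proof (qq_bounds s Hs). pose proof INR_M_pos.
  assert (1 <= INR M) by (apply (le_INR 1); lia).
  assert (0 <= 1 / INR M <= 1).
  { split. apply Rmult_le_pos; [lra|]. apply Rlt_le, Rinv_0_lt_compat; lra.
    apply Rmult_le_reg_r with (INR M); [lra|]. unfold Rdiv. rewrite Rmult_assoc, Rinv_l by lra. lra. }
  nra.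
Qed.

Lemma aa_sym d : aa (1 - s) M (- d) = aa s M d.
Proof. unfold aa. rewrite Z.abs_opp, rho_sym. reflexivity. Qed.

End Lower.

Lemma rp_sub s M m : 0 <= s <= 1 -> 0 < M ->
  rp s (S m) * (1 - (INR m + 1) / M) <=
  s * (rp s (S (S m)) * (1 - (INR m + 2) / M)) + (1 - s) * (rp s m * (1 - INR m / M)).
Proof.
  intros Hs HM. unfold rp. destruct (Rle_dec s (1/2)).
  - assert (0 <= (1 - 2*s) / M) by (apply Rmult_le_pos; [lra|apply Rlt_le, Rinv_0_lt_compat; lra]).
    replace (s * (1 * (1 - (INR m + 2) / M)) + (1 - s) * (1 * (1 - INR m / M)))
      with (1 * (1 - (INR m + 1) / M) + (1 - 2*s)/M) by (field; lra). lra.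
  - set (al := (1 - s) / s).
    assert (Hal : 0 <= al) by (unfold al; apply Rmult_le_pos; [lra|apply Rlt_le, Rinv_0_lt_compat; lra]).
    assert (0 <= al ^ m * al * (2*s - 1) / M).
    { apply Rmult_le_pos; [|apply Rlt_le, Rinv_0_lt_compat; lra].
      apply Rmult_le_pos; [|lra]. apply Rmult_le_pos; auto. apply pow_le; auto. }
    assert (E : s * (al ^ S (S m) * (1 - (INR m + 2) / M)) + (1 - s) * (al ^ m * (1 - INR m / M))
            = al ^ S m * (1 - (INR m + 1) / M) + al ^ m * al * (2*s - 1) / M).
    { simpl. unfold al. field. lra. }
    rewrite E. lra.
Qed.

Lemma aa_sub_pos s M d : 0 <= s <= 1 -> (1 <= M)%nat -> (0 < d)%Z -> (Z.abs d < Z.of_nat M)%Z ->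
  aa s M d <= s * aa s M (d + 1) + (1 - s) * aa s M (d - 1).
Proof.
  intros Hs HM Hd Hdm.
  rewrite !(aa_formula s M) by lia.
  destruct (Z_of_nat_complete_inf (d - 1)) as [m Hm]; [lia|].
  replace (d + 1)%Z with (Z.of_nat (S (S m))) by lia.
  replace (d - 1)%Z with (Z.of_nat m) by lia.
  replace d with (Z.of_nat (S m)) by lia.
  rewrite !rho_pos, !Z.abs_eq by lia. rewrite <- !INR_IZR_INZ, !S_INR.
  replace (INR m + 1 + 1) with (INR m + 2) by ring.
  apply rp_sub; auto. apply lt_0_INR; lia.
Qed.

Lemma aa_sub s M d : 0 <= s <= 1 -> (1 <= M)%nat -> d <> 0%Z -> (Z.abs d < Z.of_nat M)%Z ->
  aa s M d <= s * aa s M (d + 1) + (1 - s) * aa s M (d - 1).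
Proof.
  intros Hs HM Hd Hdm. destruct (Z_lt_dec 0 d). apply aa_sub_pos; auto.
  rewrite <- (aa_sym s M (d+1)), <- (aa_sym s M (d-1)), <- (aa_sym s M d).
  replace (- (d+1))%Z with (-d - 1)%Z by lia.
  replace (- (d-1))%Z with (-d + 1)%Z by lia.
  pose proof (aa_sub_pos (1-s) M (-d) ltac:(lra) HM ltac:(lia) ltac:(lia)).
  replace (1 - (1 - s)) with s in H by ring. lra.
Qed.

Lemma vv_bounds s M T d : 0 <= s <= 1 -> 0 <= vv s M T d <= 1.
Proof.
  intro Hs; revert d; induction T as [|T IH]; intro d; simpl;
  destruct (Z_lt_dec (Z.abs d) (Z.of_nat M)); try lra.
  destruct (IH (d+1)%Z); destruct (IH (d-1)%Z); nra.
Qed.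

Lemma vv_out s M T d : ~ (Z.abs d < Z.of_nat M)%Z -> vv s M T d = 0.
Proof. intro H; destruct T; simpl; destruct (Z_lt_dec (Z.abs d) (Z.of_nat M)); tauto. Qed.

Lemma vv_sym s M T d : vv (1 - s) M T (- d) = vv s M T d.
Proof.
  revert d; induction T as [|T IH]; intro d; simpl; rewrite Z.abs_opp; auto.
  destruct (Z_lt_dec (Z.abs d) (Z.of_nat M)); auto.
  replace (- d + 1)%Z with (- (d - 1))%Z by lia.
  replace (- d - 1)%Z with (- (d + 1))%Z by lia.
  rewrite !IH. ring.
Qed.

Lemma vv_exit s M m d : 0 <= s <= 1 -> (Z.of_nat M <= d + Z.of_nat m)%Z -> vv s M m d <= 1 - s ^ m.
Proof.
  intro Hs; revert d; induction m as [|m IH]; intros d Hd.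
  - rewrite vv_out by lia. simpl; lra.
  - simpl. destruct (Z_lt_dec (Z.abs d) (Z.of_nat M)).
    + pose proof (IH (d+1)%Z ltac:(lia)). pose proof (vv_bounds s M m (d-1)%Z Hs).
      pose proof (pow_le s m (proj1 Hs)). nra.
    + pose proof (pow_le1 s m Hs). pose proof (pow_le s m (proj1 Hs)). nra.
Qed.

Lemma vv_2M s M d : 0 <= s <= 1 -> vv s M (2 * M) d <= 1 - (1/2) ^ (2 * M).
Proof.
  intro Hs. destruct (Z_lt_dec (Z.abs d) (Z.of_nat M)).
  - destruct (Rle_dec (1/2) s).
    + pose proof (vv_exit s M (2*M) d Hs ltac:(lia)).
      pose proof (pow_incr (1/2) s (2*M) ltac:(lra)). lra.
    + rewrite <- vv_sym. pose proof (vv_exit (1-s) M (2*M) (-d) ltac:(lra) ltac:(lia)).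
      pose proof (pow_incr (1/2) (1-s) (2*M) ltac:(lra)). lra.
  - rewrite vv_out by auto. pose proof (pow_le1 (1/2) (2*M) ltac:(lra)). lra.
Qed.

Lemma vv_comp s M T c : 0 <= s <= 1 -> (forall e, vv s M T e <= c) ->
  forall m d, vv s M (T + m) d <= c * vv s M m d.
Proof.
  intros Hs Hc m; induction m as [|m IH]; intro d.
  - rewrite Nat.add_0_r. simpl. destruct (Z_lt_dec (Z.abs d) (Z.of_nat M)).
    + rewrite Rmult_1_r; auto.
    + rewrite vv_out by auto. lra.
  - rewrite Nat.add_succ_r. simpl. destruct (Z_lt_dec (Z.abs d) (Z.of_nat M)); [|lra].
    pose proof (IH (d+1)%Z); pose proof (IH (d-1)%Z).
    assert (s * vv s M (T + m) (d + 1) <= s * (c * vv s M m (d + 1))) by (apply Rmult_le_compat_l; lra).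
    assert ((1-s) * vv s M (T + m) (d - 1) <= (1-s) * (c * vv s M m (d - 1))) by (apply Rmult_le_compat_l; lra).
    nra.
Qed.

Lemma vv_geom s M j d : 0 <= s <= 1 -> vv s M (2 * M * j) d <= (1 - (1/2) ^ (2 * M)) ^ j.
Proof.
  intro Hs; revert d; induction j as [|j IH]; intro d.
  - rewrite Nat.mul_0_r. simpl. pose proof (vv_bounds s M 0 d Hs). simpl in H. lra.
  - replace (2 * M * S j)%nat with (2 * M * j + 2 * M)%nat by lia.
    pose proof (vv_comp s M (2*M*j) _ Hs IH (2*M) d).
    pose proof (vv_2M s M d Hs).
    assert (0 <= (1 - (1/2) ^ (2 * M)) ^ j).
    { apply pow_le. pose proof (pow_le1 (1/2) (2*M) ltac:(lra)). lra. }
    set (th := 1 - (1/2) ^ (2 * M)) in *.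
    replace (th ^ S j) with (th ^ j * th) by (simpl; ring).
    assert (th ^ j * vv s M (2 * M) d <= th ^ j * th) by (apply Rmult_le_compat_l; lra).
    lra.
Qed.

Lemma Wf_lower s M T d k : 0 <= s <= 1 -> (1 <= M)%nat ->
  hh s M d k - vv s M T d <= Wf s T d k.
Proof.
  intros Hs HM; revert d k; induction T as [|T IH]; intros d k.
  - destruct k as [|k].
    + simpl. pose proof (vv_bounds s M 0 d Hs). simpl in H. lra.
    + pose proof (Wf_bounds s 0 d (S k) Hs).
      simpl hh. pose proof (aa_bounds s Hs M HM d). pose proof (QQ_bounds s Hs M HM).
      pose proof (pow_le1 (QQ s M) k H1). pose proof (pow_le (QQ s M) k (proj1 H1)).
      simpl vv. destruct (Z_lt_dec (Z.abs d) (Z.of_nat M)).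
      * nra.
      * unfold aa. destruct (Z_lt_dec (Z.abs d) (Z.of_nat M)); [tauto|]. lra.
  - destruct k as [|k].
    + rewrite Wf_k0. simpl hh. pose proof (vv_bounds s M (S T) d Hs). lra.
    + pose proof (aa_bounds s Hs M HM). pose proof (QQ_bounds s Hs M HM).
      change (Wf s (S T) d (S k)) with (s * Wf s T (d + 1)%Z (S k - tz d) + (1 - s) * Wf s T (d - 1)%Z (S k - tz d)).
      simpl vv. destruct (Z_lt_dec (Z.abs d) (Z.of_nat M)) as [Hin|Hout].
      * assert (Hkey : hh s M d (S k) <= s * hh s M (d+1) (S k - tz d) + (1 - s) * hh s M (d-1) (S k - tz d)).
        { unfold tz. destruct (Z.eqb_spec d 0).
          - subst. replace (S k - 1)%nat with k by lia. destruct k as [|k].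
            + simpl hh. specialize (H 0%Z). lra.
            + simpl hh. replace (0+1)%Z with 1%Z by lia. replace (0-1)%Z with (-1)%Z by lia.
              rewrite !(aa_formula s M) by lia. rewrite rho_0. simpl Z.abs.
              replace (QQ s M * QQ s M ^ k) with
                (s * (rho s 1 * (1 - IZR 1 / INR M) * QQ s M ^ k) + (1 - s) * (rho s (-1) * (1 - IZR 1 / INR M) * QQ s M ^ k)).
              simpl IZR. lra. unfold QQ, qq. simpl IZR. ring.
          - replace (S k - 0)%nat with (S k) by lia. simpl hh.
            pose proof (aa_sub s M d Hs HM n Hin). pose proof (pow_le (QQ s M) k (proj1 H0)). nra. }
        pose proof (IH (d+1)%Z (S k - tz d)%nat); pose proof (IH (d-1)%Z (S k - tz d)%nat).
        assert (s * (hh s M (d + 1) (S k - tz d) - vv s M T (d + 1)) <= s * Wf s T (d + 1) (S k - tz d)) by (apply Rmult_le_compat_l; lra).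
        assert ((1-s) * (hh s M (d - 1) (S k - tz d) - vv s M T (d - 1)) <= (1-s) * Wf s T (d - 1) (S k - tz d)) by (apply Rmult_le_compat_l; lra).
        lra.
      * simpl hh. unfold aa. destruct (Z_lt_dec (Z.abs d) (Z.of_nat M)); [tauto|].
        pose proof (Wf_bounds s T (d+1)%Z (S k - tz d) Hs). pose proof (Wf_bounds s T (d-1)%Z (S k - tz d) Hs). nra.
Qed.


Definition Bf (x y : nat) (s : R) : R := s ^ (x - 1) * (1 - s) ^ (y - 1).

Lemma Bf_cts x y : Cts (Bf x y).
Proof. unfold Bf. apply Cts_mult; apply Cts_pow; auto using Cts_id, Cts_minus, Cts_const. Qed.

Lemma RInt_mult_const f c : ex_RInt f 0 1 -> RInt (fun s => f s * c) 0 1 = RInt f 0 1 * c.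
Proof.
  intro H. rewrite (RInt_ext (V:=R_CompleteNormedModule) _ (fun s => scal c (f s))).
  rewrite (RInt_scal (V:=R_CompleteNormedModule)) by auto. unfold scal; simpl; unfold mult; simpl. ring.
  intros; unfold scal; simpl; unfold mult; simpl. ring.
Qed.

Lemma RInt_add f g : ex_RInt f 0 1 -> ex_RInt g 0 1 ->
  RInt (fun s => f s + g s) 0 1 = RInt f 0 1 + RInt g 0 1.
Proof. intros Hf Hg. exact (RInt_plus (V:=R_CompleteNormedModule) f g 0 1 Hf Hg). Qed.

Lemma RInt_sub f g : ex_RInt f 0 1 -> ex_RInt g 0 1 ->
  RInt (fun s => f s - g s) 0 1 = RInt f 0 1 - RInt g 0 1.
Proof. intros Hf Hg. exact (RInt_minus (V:=R_CompleteNormedModule) f g 0 1 Hf Hg). Qed.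

Lemma Beta_ibp a b :
  INR (S a) * Beta (S a) (S (S b)) = INR (S b) * Beta (S (S a)) (S b).
Proof.
  unfold Beta.
  set (F := fun s => s ^ (S a) * (1 - s) ^ (S b)).
  set (dF := fun s => INR (S a) * (s ^ a * (1 - s) ^ (S b)) - INR (S b) * (s ^ (S a) * (1 - s) ^ b)).
  assert (HI : is_RInt dF 0 1 (minus (F 1) (F 0))).
  { apply (is_RInt_derive (V:=R_CompleteNormedModule)).
    - intros z _. unfold F, dF. auto_derive; auto.
      change (match a with 0%nat => 1 | S _ => INR a + 1 end) with (INR (S a)).
      change (match b with 0%nat => 1 | S _ => INR b + 1 end) with (INR (S b)). replace (1 + - z) with (1 - z) by ring. simpl. ring.
    - intros z _. unfold dF. apply Cts_minus; apply Cts_mult; try apply Cts_const;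
      apply Cts_mult; apply Cts_pow; auto using Cts_id, Cts_minus, Cts_const. }
  apply (is_RInt_unique (V:=R_CompleteNormedModule)) in HI.
  unfold F, minus, plus, opp in HI; simpl in HI.
  assert (E: RInt dF 0 1 = INR (S a) * RInt (fun s => s ^ a * (1 - s) ^ (S b)) 0 1
                           - INR (S b) * RInt (fun s => s ^ (S a) * (1 - s) ^ b) 0 1).
  { assert (C1 : ex_RInt (fun s => s ^ a * (1 - s) ^ (S b)) 0 1).
    { apply Cts_RInt; repeat apply Cts_mult; try apply Cts_pow; auto using Cts_id, Cts_minus, Cts_const. }
    assert (C2 : ex_RInt (fun s => s ^ (S a) * (1 - s) ^ b) 0 1).
    { apply Cts_RInt; repeat apply Cts_mult; try apply Cts_pow; auto using Cts_id, Cts_minus, Cts_const. }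
    rewrite (Rmult_comm (INR (S a))), (Rmult_comm (INR (S b))).
    rewrite <- (RInt_mult_const _ (INR (S a)) C1), <- (RInt_mult_const _ (INR (S b)) C2).
    rewrite <- RInt_sub.
    apply (RInt_ext (V:=R_CompleteNormedModule)). intros x _. unfold dF. lazymatch goal with |- ?A = ?B => change (@eq R A B) end. ring.
    all: apply Cts_RInt; repeat apply Cts_mult; try apply Cts_pow; auto using Cts_id, Cts_minus, Cts_const. }
  simpl Nat.sub. rewrite !Nat.sub_0_r.
  replace (1 - 1) with 0 in HI by ring. rewrite E in HI.
  assert (Z0: 1 * 1 ^ a * (0 * 0 ^ b) + - (0 * 0 ^ a * ((1 - 0) * (1 - 0) ^ b)) = 0) by ring. rewrite Z0 in HI. lra.
Qed.

Lemma Beta_split a b :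
  Beta (S a) (S b) = Beta (S (S a)) (S b) + Beta (S a) (S (S b)).
Proof.
  unfold Beta. simpl Nat.sub. rewrite !Nat.sub_0_r.
  rewrite <- RInt_add.
  apply (RInt_ext (V:=R_CompleteNormedModule)). intros. simpl. ring.
  all: apply Cts_RInt; repeat apply Cts_mult; try apply Cts_pow; auto using Cts_id, Cts_minus, Cts_const.
Qed.

Lemma Beta_recx a b :
  Beta (S (S a)) (S b) * (INR (S a) + INR (S b)) = INR (S a) * Beta (S a) (S b).
Proof. rewrite (Beta_split a b), (Rmult_plus_distr_l (INR (S a))), (Beta_ibp a b). ring. Qed.

Lemma Beta_recy a b :
  Beta (S a) (S (S b)) * (INR (S a) + INR (S b)) = INR (S b) * Beta (S a) (S b).
Proof. rewrite (Beta_split a b), (Rmult_plus_distr_l (INR (S b))), <- (Beta_ibp a b). ring. Qed.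

Lemma tie_tz x y : tie x y = tz (Z.of_nat x - Z.of_nat y).
Proof.
  unfold tie, tz. destruct (Nat.eqb_spec x y); destruct (Z.eqb_spec (Z.of_nat x - Z.of_nat y) 0); lia.
Qed.

Lemma Wf_S s T d k : Wf s (S T) d k = s * Wf s T (d + 1)%Z (k - tz d) + (1 - s) * Wf s T (d - 1)%Z (k - tz d).
Proof. reflexivity. Qed.

Lemma represent T : forall x y k, (1 <= x)%nat -> (1 <= y)%nat ->
  ties_ge_prob 1 T x y k * Beta x y =
  RInt (fun s => Bf x y s * Wf s T (Z.of_nat x - Z.of_nat y) k) 0 1.
Proof.
  induction T as [|T IH]; intros x y k Hx Hy.
  - simpl. rewrite RInt_mult_const. rewrite tie_tz. unfold Beta, Bf. ring.
    apply Cts_RInt, Bf_cts.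
  - destruct x as [|a]; [lia|]. destruct y as [|b]; [lia|].
    change (ties_ge_prob 1 (S T) (S a) (S b) k) with
      (1 * INR (S a) / (1 * INR (S a) + INR (S b)) * ties_ge_prob 1 T (S (S a)) (S b) (k - tie (S a) (S b))
       + INR (S b) / (1 * INR (S a) + INR (S b)) * ties_ge_prob 1 T (S a) (S (S b)) (k - tie (S a) (S b))).
    assert (Hpos : 0 < INR (S a) + INR (S b)) by (rewrite !S_INR; pose proof (pos_INR a); pose proof (pos_INR b); lra).
    assert (E1 : 1 * INR (S a) / (1 * INR (S a) + INR (S b)) * Beta (S a) (S b) = Beta (S (S a)) (S b)).
    { pose proof (Beta_recx a b). rewrite !Rmult_1_l. field_simplify; [|lra]. rewrite <- H. field. lra. }
    assert (E2 : INR (S b) / (1 * INR (S a) + INR (S b)) * Beta (S a) (S b) = Beta (S a) (S (S b))).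
    { pose proof (Beta_recy a b). rewrite !Rmult_1_l. field_simplify; [|lra]. rewrite <- H. field. lra. }
    set (k' := (k - tie (S a) (S b))%nat).
    set (G1 := ties_ge_prob 1 T (S (S a)) (S b) k').
    set (G2 := ties_ge_prob 1 T (S a) (S (S b)) k').
    set (px := 1 * INR (S a) / (1 * INR (S a) + INR (S b))) in *.
    set (py := INR (S b) / (1 * INR (S a) + INR (S b))) in *.
    replace ((px * G1 + py * G2) * Beta (S a) (S b)) with
      (G1 * (px * Beta (S a) (S b)) + G2 * (py * Beta (S a) (S b))) by ring.
    rewrite E1, E2. unfold G1, G2. rewrite !IH by lia.
    rewrite <- RInt_add.
    2,3: apply Cts_RInt, Cts_mult; [apply Bf_cts| apply Wf_cts].
    apply (RInt_ext (V:=R_CompleteNormedModule)). intros s _. rewrite Wf_S.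
    replace (Z.of_nat (S (S a)) - Z.of_nat (S b))%Z with ((Z.of_nat (S a) - Z.of_nat (S b)) + 1)%Z by lia.
    replace (Z.of_nat (S a) - Z.of_nat (S (S b)))%Z with ((Z.of_nat (S a) - Z.of_nat (S b)) - 1)%Z by lia.
    unfold k'. rewrite tie_tz. set (dd := (Z.of_nat (S a) - Z.of_nat (S b))%Z).
    unfold Bf. replace (S (S a) - 1)%nat with (S a) by lia. replace (S (S b) - 1)%nat with (S b) by lia.
    replace (S a - 1)%nat with a by lia. replace (S b - 1)%nat with b by lia.
    simpl pow. lazymatch goal with |- ?A = ?B => change (@eq R A B) end. ring.
Qed.


Definition qf (s : R) : R := 1 - 2 * Rabs (s - 1/2).

Lemma qf_cts : Cts qf.
Proof. unfold qf. apply Cts_minus. apply Cts_const. apply Cts_mult. apply Cts_const. apply Cts_abs. apply Cts_minus; auto using Cts_id, Cts_const. Qed.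

Lemma qq_formula s : 0 <= s <= 1 -> qq s = qf s.
Proof.
  intro Hs. unfold qq, qf. replace (-1)%Z with (- 1)%Z by reflexivity.
  rewrite <- (rho_sym s (-1)). replace (- - 1)%Z with 1%Z by reflexivity.
  rewrite (rho_pos s 1 : rho s 1 = rp s 1), (rho_pos (1 - s) 1 : rho (1-s) 1 = rp (1-s) 1). unfold rp.
  destruct (Rle_dec s (1/2)); destruct (Rle_dec (1 - s) (1/2)).
  - assert (s = 1/2) by lra. subst. replace (1/2 - 1/2) with 0 by ring. rewrite Rabs_R0. simpl. lra.
  - rewrite Rabs_left1 by lra. simpl. field. lra.
  - rewrite Rabs_right by lra. simpl. field. lra.
  - lra.
Qed.

Lemma bernoulli al m : 0 <= al -> 1 + INR m * (al - 1) <= al ^ m.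
Proof.
  intro H; induction m as [|m IH]; [simpl; lra|].
  rewrite S_INR. change (al ^ S m) with (al * al ^ m). pose proof (pos_INR m).
  assert (al * (1 + INR m*(al-1)) <= al * al^m) by (apply Rmult_le_compat_l; lra).
  assert (0 <= INR m * ((al - 1) * (al - 1))) by (apply Rmult_le_pos; [lra|apply Rle_0_sqr]).
  nra.
Qed.

Lemma rp_lower s m : 0 <= s <= 1 -> 1 - 4 * INR m * Rabs (s - 1/2) <= rp s m.
Proof.
  intro Hs. unfold rp. destruct (Rle_dec s (1/2)).
  - pose proof (pos_INR m); pose proof (Rabs_pos (s - 1/2)). nra.
  - rewrite Rabs_right by lra.
    pose proof (bernoulli ((1-s)/s) m ltac:(apply Rmult_le_pos; [lra|apply Rlt_le, Rinv_0_lt_compat; lra])).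
    assert ((1-s)/s - 1 >= - (4 * (s - 1/2))).
    { replace ((1-s)/s - 1) with (-(2*s-1)/s) by (field; lra).
      apply Rle_ge. apply Rmult_le_reg_r with s; [lra|].
      unfold Rdiv. rewrite Rmult_assoc, Rinv_l by lra. nra. }
    pose proof (pos_INR m). nra.
Qed.

Lemma rho_lower s d : 0 <= s <= 1 -> 1 - 4 * IZR (Z.abs d) * Rabs (s - 1/2) <= rho s d.
Proof.
  intro Hs. rewrite <- Nat2Z.inj_abs_nat, <- INR_IZR_INZ. unfold rho.
  destruct (Z_lt_dec d 0).
  - replace (Rabs (s - 1/2)) with (Rabs ((1 - s) - 1/2)). apply rp_lower; lra.
    rewrite <- Rabs_Ropp. f_equal. field.
  - apply rp_lower; lra.
Qed.


Ltac req := lazymatch goal with |- ?A = ?B => change (@eq R A B) end.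

Lemma RInt_FTC (F f : R -> R) a b : a <= b ->
  (forall x, a <= x <= b -> is_derive F x (f x)) -> Cts f ->
  RInt f a b = F b - F a.
Proof.
  intros Hab HF Hf.
  apply (is_RInt_unique (V:=R_CompleteNormedModule)).
  apply (is_RInt_derive (V:=R_CompleteNormedModule)).
  - intros x Hx. rewrite Rmin_left, Rmax_right in Hx by lra. auto.
  - intros; apply Hf.
Qed.

Lemma RInt_split f : Cts f -> RInt f 0 1 = RInt f 0 (1/2) + RInt f (1/2) 1.
Proof.
  intro Hf. symmetry. apply (RInt_Chasles (V:=R_CompleteNormedModule)); apply Cts_RInt; auto.
Qed.

Lemma K0 n : RInt (fun s => qf s ^ n) 0 1 = 1 / (INR n + 1).
Proof.
  assert (Hn : 0 < INR n + 1) by (pose proof (pos_INR n); lra).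
  rewrite RInt_split by (apply Cts_pow, qf_cts).
  rewrite (RInt_ext (V:=R_CompleteNormedModule) _ (fun s => (2 * s) ^ n) 0 (1/2)).
  2: { intros x Hx. rewrite Rmin_left, Rmax_right in Hx by lra. unfold qf.
       rewrite Rabs_left by lra. replace (1 - 2 * - (x - 1 / 2)) with (2 * x) by field. reflexivity. }
  rewrite (RInt_ext (V:=R_CompleteNormedModule) _ (fun s => (2 - 2 * s) ^ n) (1/2) 1).
  2: { intros x Hx. rewrite Rmin_left, Rmax_right in Hx by lra. unfold qf.
       rewrite Rabs_right by lra. replace (1 - 2 * (x - 1 / 2)) with (2 - 2 * x) by field. reflexivity. }
  rewrite (RInt_FTC (fun s => (2 * s) ^ (S n) / (2 * (INR n + 1)))).
  rewrite (RInt_FTC (fun s => - (2 - 2 * s) ^ (S n) / (2 * (INR n + 1)))).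
  - replace (2 * (1/2)) with 1 by field. replace (2 - 2 * (1/2)) with 1 by field.
    replace (2 * 0) with 0 by ring. replace (2 - 2 * 1) with 0 by ring.
    replace (2 - 1) with 1 by ring. rewrite pow1. rewrite pow_i by lia. req. field. lra.
  - lra.
  - intros x _. auto_derive; [lra|]. change (match n with 0%nat => 1 | S _ => INR n + 1 end) with (INR (S n)). rewrite S_INR. replace (2 + - (2 * x)) with (2 - 2 * x) by ring. req. field. lra.
  - apply Cts_pow. apply Cts_minus; [apply Cts_const|apply Cts_mult; auto using Cts_const, Cts_id].
  - lra.
  - intros x _. auto_derive; [lra|]. change (match n with 0%nat => 1 | S _ => INR n + 1 end) with (INR (S n)). rewrite S_INR. req. field. lra.
  - apply Cts_pow. apply Cts_mult; auto using Cts_const, Cts_id.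
Qed.

Ltac fixmatch n := change (match n with 0%nat => 1 | S _ => INR n + 1 end) with (INR (S n)); rewrite ?S_INR.

Lemma K1 n : RInt (fun s => Rabs (s - 1/2) * qf s ^ n) 0 1 = 1 / (2 * (INR n + 1) * (INR n + 2)).
Proof.
  assert (Hn : 0 < INR n + 1) by (pose proof (pos_INR n); lra).
  rewrite RInt_split by (apply Cts_mult; [apply Cts_abs, Cts_minus; auto using Cts_id, Cts_const|apply Cts_pow, qf_cts]).
  rewrite (RInt_ext (V:=R_CompleteNormedModule) _ (fun s => (1/2 - s) * (2 * s) ^ n) 0 (1/2)).
  2: { intros x Hx. rewrite Rmin_left, Rmax_right in Hx by lra. unfold qf.
       rewrite Rabs_left by lra. replace (1 - 2 * - (x - 1 / 2)) with (2 * x) by field.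
       replace (- (x - 1/2)) with (1/2 - x) by field. reflexivity. }
  rewrite (RInt_ext (V:=R_CompleteNormedModule) _ (fun s => (s - 1/2) * (2 - 2 * s) ^ n) (1/2) 1).
  2: { intros x Hx. rewrite Rmin_left, Rmax_right in Hx by lra. unfold qf.
       rewrite Rabs_right by lra. replace (1 - 2 * (x - 1 / 2)) with (2 - 2 * x) by field. reflexivity. }
  rewrite (RInt_FTC (fun s => (2 * s) ^ (S n) / (4 * (INR n + 1)) - (2 * s) ^ (S (S n)) / (4 * (INR n + 2)))).
  rewrite (RInt_FTC (fun s => - (2 - 2 * s) ^ (S n) / (4 * (INR n + 1)) + (2 - 2 * s) ^ (S (S n)) / (4 * (INR n + 2)))).
  - replace (2 * (1/2)) with 1 by field. replace (2 - 1) with 1 by ring.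
    replace (2 * 0) with 0 by ring. replace (2 - 2 * 1) with 0 by ring.
    rewrite !pow1, !pow_i by lia. req. field. lra.
  - lra.
  - intros x _. auto_derive; [lra|]. fixmatch n. replace (2 + - (2 * x)) with (2 - 2 * x) by ring.
    simpl pow. req. field. lra.
  - apply Cts_mult. apply Cts_minus; auto using Cts_id, Cts_const.
    apply Cts_pow. apply Cts_minus; [apply Cts_const|apply Cts_mult; auto using Cts_const, Cts_id].
  - lra.
  - intros x _. auto_derive; [lra|]. fixmatch n. simpl pow. req. field. lra.
  - apply Cts_mult. apply Cts_minus; auto using Cts_id, Cts_const.
    apply Cts_pow. apply Cts_mult; auto using Cts_const, Cts_id.
Qed.


Lemma lip_b b s t : 0 <= s <= 1 -> 0 <= t <= 1 ->
  Rabs ((1 - s) ^ b - (1 - t) ^ b) <= INR b * Rabs (s - t).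
Proof.
  intros Hs Ht; induction b as [|b IH].
  - simpl. replace (1 - 1) with 0 by ring. rewrite Rabs_R0. lra.
  - rewrite S_INR. simpl pow.
    replace ((1 - s) * (1 - s) ^ b - (1 - t) * (1 - t) ^ b)
      with ((1 - s) * ((1 - s) ^ b - (1 - t) ^ b) + (1 - t) ^ b * (t - s)) by ring.
    eapply Rle_trans; [apply Rabs_triang|]. rewrite !Rabs_mult.
    pose proof (pow_le1 (1 - t) b ltac:(lra)). pose proof (pow_le (1 - t) b ltac:(lra)).
    rewrite (Rabs_right (1 - s)) by lra. rewrite (Rabs_right ((1-t)^b)) by lra.
    rewrite (Rabs_minus_sym t s).
    pose proof (Rabs_pos (s - t)). pose proof (Rabs_pos ((1 - s) ^ b - (1 - t) ^ b)).
    assert ((1 - s) * Rabs ((1 - s) ^ b - (1 - t) ^ b) <= Rabs ((1 - s) ^ b - (1 - t) ^ b)) by nra.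
    nra.
Qed.

Lemma lip a b s t : 0 <= s <= 1 -> 0 <= t <= 1 ->
  Rabs (s ^ a * (1 - s) ^ b - t ^ a * (1 - t) ^ b) <= INR (a + b) * Rabs (s - t).
Proof.
  intros Hs Ht; induction a as [|a IH].
  - simpl. rewrite !Rmult_1_l. apply lip_b; auto.
  - replace (INR (S a + b)) with (INR (a + b) + 1) by (rewrite <- S_INR; f_equal; lia).
    simpl pow.
    replace (s * s ^ a * (1 - s) ^ b - t * t ^ a * (1 - t) ^ b)
      with (s * (s ^ a * (1 - s) ^ b - t ^ a * (1 - t) ^ b) + t ^ a * (1 - t) ^ b * (s - t)) by ring.
    eapply Rle_trans; [apply Rabs_triang|]. rewrite !Rabs_mult.
    pose proof (pow_le1 (1 - t) b ltac:(lra)). pose proof (pow_le (1 - t) b ltac:(lra)).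
    pose proof (pow_le1 t a ltac:(lra)). pose proof (pow_le t a ltac:(lra)).
    rewrite (Rabs_right s) by lra. rewrite (Rabs_right (t^a)) by lra. rewrite (Rabs_right ((1-t)^b)) by lra.
    pose proof (Rabs_pos (s - t)). pose proof (Rabs_pos (s ^ a * (1 - s) ^ b - t ^ a * (1 - t) ^ b)).
    assert (s * Rabs (s ^ a * (1 - s) ^ b - t ^ a * (1 - t) ^ b) <= Rabs (s ^ a * (1 - s) ^ b - t ^ a * (1 - t) ^ b)) by nra.
    assert (t ^ a * (1 - t) ^ b <= 1) by nra.
    assert (t ^ a * (1 - t) ^ b * Rabs (s - t) <= Rabs (s - t)) by nra.
    nra.
Qed.

Lemma inv_lim : is_lim_seq (fun n => / (INR n + 1)) 0.
Proof.
  assert (H : is_lim_seq (fun n => INR n + 1) p_infty).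
  { apply is_lim_seq_ext with (fun n => INR (S n)). intros; apply S_INR.
    apply (is_lim_seq_incr_1 INR p_infty), is_lim_seq_INR. }
  apply is_lim_seq_inv in H; [|discriminate]. exact H.
Qed.

Lemma qf_nonneg s : 0 <= s <= 1 -> 0 <= qf s.
Proof.
  intro Hs. unfold qf. destruct (Rle_dec s (1/2)).
  rewrite Rabs_left1 by lra. lra. rewrite Rabs_right by lra. lra.
Qed.

Lemma asym (g : R -> R) g0 L : Cts g -> 0 <= L ->
  (forall s, 0 < s < 1 -> Rabs (g s - g0) <= L * Rabs (s - 1/2)) ->
  is_lim_seq (fun n => (INR n + 1) * RInt (fun s => g s * qf s ^ n) 0 1) g0.
Proof.
  intros Hg HL Hb.
  assert (Hbound : forall n, Rabs ((INR n + 1) * RInt (fun s => g s * qf s ^ n) 0 1 - g0) <= L / (INR n + 1)).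
  { intro n. assert (Hn : 0 < INR n + 1) by (pose proof (pos_INR n); lra).
    assert (Cq : Cts (fun s => qf s ^ n)) by (apply Cts_pow, qf_cts).
    assert (Ca : Cts (fun s => Rabs (s - 1/2) * qf s ^ n)) by (apply Cts_mult; [apply Cts_abs, Cts_minus; auto using Cts_id, Cts_const|auto]).
    assert (E : (INR n + 1) * RInt (fun s => g s * qf s ^ n) 0 1 - g0 =
                (INR n + 1) * RInt (fun s => (g s - g0) * qf s ^ n) 0 1).
    { rewrite (RInt_ext (V:=R_CompleteNormedModule) (fun s => (g s - g0) * qf s ^ n) (fun s => g s * qf s ^ n - qf s ^ n * g0)) by (intros; lazymatch goal with |- ?A = ?B => change (@eq R A B) end; ring).
      rewrite RInt_sub, RInt_mult_const, K0. field. lra.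
      apply Cts_RInt; auto. apply Cts_RInt, Cts_mult; auto. apply Cts_RInt, Cts_mult; auto using Cts_const. }
    rewrite E.
    assert (I1 : RInt (fun s => (g s - g0) * qf s ^ n) 0 1 <= RInt (fun s => (Rabs (s - 1/2) * qf s ^ n) * L) 0 1).
    { apply RInt_le. lra. apply Cts_RInt, Cts_mult; auto using Cts_minus, Cts_const.
      apply Cts_RInt, Cts_mult; auto using Cts_const.
      intros x Hx. pose proof (Hb x Hx). pose proof (pow_le (qf x) n (qf_nonneg x ltac:(lra))).
      pose proof (Rle_abs (g x - g0)). nra. }
    assert (I2 : - RInt (fun s => (Rabs (s - 1/2) * qf s ^ n) * L) 0 1 <= RInt (fun s => (g s - g0) * qf s ^ n) 0 1).
    { assert (Eneg : RInt (fun s => (Rabs (s-1/2) * qf s ^ n * L) * -1) 0 1 = - RInt (fun s => Rabs (s-1/2) * qf s ^ n * L) 0 1).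
      { rewrite RInt_mult_const. req. ring. apply Cts_RInt, Cts_mult; auto using Cts_const. }
      rewrite <- Eneg.
      apply RInt_le. lra. apply Cts_RInt, Cts_mult; auto using Cts_const. apply Cts_mult; auto using Cts_const.
      apply Cts_RInt, Cts_mult; auto using Cts_minus, Cts_const.
      intros x Hx. pose proof (Hb x Hx). pose proof (pow_le (qf x) n (qf_nonneg x ltac:(lra))).
      pose proof (Rle_abs (- (g x - g0))). rewrite Rabs_Ropp in H1. nra. }
    rewrite RInt_mult_const, K1 in I1, I2 by (apply Cts_RInt; auto).
    assert (0 <= L / (2 * (INR n + 1) * (INR n + 2))).
    { apply Rmult_le_pos; auto. apply Rlt_le, Rinv_0_lt_compat. nra. }
    assert (L / (2 * (INR n + 1) * (INR n + 2)) * (INR n + 1) <= L / (INR n + 1)).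
    { replace (L / (2 * (INR n + 1) * (INR n + 2)) * (INR n + 1)) with (L / (2 * (INR n + 2))) by (field; lra).
      apply Rmult_le_compat_l; auto. apply Rinv_le_contravar; lra. }
    apply Rabs_le. split.
    - replace (1 / (2 * (INR n + 1) * (INR n + 2)) * L) with (L / (2 * (INR n + 1) * (INR n + 2))) in I2 by (field; lra).
      nra.
    - replace (1 / (2 * (INR n + 1) * (INR n + 2)) * L) with (L / (2 * (INR n + 1) * (INR n + 2))) in I1 by (field; lra).
      nra. }
  apply is_lim_seq_le_le with (u := fun n => g0 - L / (INR n + 1)) (w := fun n => g0 + L / (INR n + 1)).
  - intro n. pose proof (Hbound n). apply Rabs_le_between' in H. lra.
  - assert (Hl : is_lim_seq (fun n => L * / (INR n + 1)) (L * 0)) by exact (is_lim_seq_scal_l _ L 0 inv_lim).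
    pose proof (is_lim_seq_minus' (fun _ => g0) _ g0 (L*0) (is_lim_seq_const g0) Hl) as H.
    replace (g0 - L * 0) with g0 in H by ring. exact H.
  - assert (Hl : is_lim_seq (fun n => L * / (INR n + 1)) (L * 0)) by exact (is_lim_seq_scal_l _ L 0 inv_lim).
    pose proof (is_lim_seq_plus' (fun _ => g0) _ g0 (L*0) (is_lim_seq_const g0) Hl) as H.
    replace (g0 + L * 0) with g0 in H by ring. exact H.
Qed.


Lemma Beta_pos_S a b : 0 < Beta (S a) (S b).
Proof.
  induction a as [|a IHa].
  - induction b as [|b IHb].
    + unfold Beta. simpl. rewrite (RInt_ext (V:=R_CompleteNormedModule) _ (fun _ => 1)).
      rewrite RInt_const. unfold scal; simpl; unfold mult; simpl. lra.
      intros; simpl; ring.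
    + pose proof (Beta_recy 0 b). pose proof (pos_INR b).
      rewrite !S_INR in H. simpl INR in H.
      assert (0 < Beta 1 (S (S b)) * (0 + 1 + (INR b + 1))) by (rewrite H; nra). nra.
  - pose proof (Beta_recx a b). pose proof (pos_INR a). pose proof (pos_INR b).
    rewrite !S_INR in H.
    assert (0 < Beta (S (S a)) (S b) * (INR a + 1 + (INR b + 1))) by (rewrite H; nra). nra.
Qed.

Lemma Beta_pos x y : (1 <= x)%nat -> (1 <= y)%nat -> 0 < Beta x y.
Proof. intros. destruct x; [lia|]. destruct y; [lia|]. apply Beta_pos_S. Qed.

Lemma Bf_bounds x y s : 0 <= s <= 1 -> 0 <= Bf x y s <= 1.
Proof.
  intro Hs. unfold Bf. pose proof (pow_le s (x-1) (proj1 Hs)). pose proof (pow_le1 s (x-1) Hs).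
  pose proof (pow_le (1-s) (y-1) ltac:(lra)). pose proof (pow_le1 (1-s) (y-1) ltac:(lra)). nra.
Qed.

Lemma inv_lim_N N : is_lim_seq (fun k => / INR (k + S N)) 0.
Proof.
  pose proof inv_lim as H.
  apply (is_lim_seq_incr_n _ N) in H.
  apply is_lim_seq_ext with (fun n => / (INR (n + N) + 1)); auto.
  intro n. rewrite <- S_INR. f_equal. f_equal. lia.
Qed.

Lemma lim_pow u (l : R) m : is_lim_seq u l -> is_lim_seq (fun k => u k ^ m) (l ^ m).
Proof.
  intro H; induction m as [|m IH]; simpl. apply is_lim_seq_const.
  exact (is_lim_seq_mult' u (fun k => u k ^ m) l (l^m) H IH).
Qed.

Section Main.
Variables x0 y0 : nat.
Hypothesis hx : (1 <= x0)%nat.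
Hypothesis hy : (1 <= y0)%nat.

Let f := Bf x0 y0.
Let d := (Z.of_nat x0 - Z.of_nat y0)%Z.
Let D := IZR (Z.abs d).
Let B := Beta x0 y0.

Definition Iup (m : nat) := RInt (fun s => f s * qf s ^ m) 0 1.
Definition glo (s : R) := f s * (1 - 4 * D * Rabs (s - 1/2)).
Definition Ilo (m : nat) := RInt (fun s => glo s * qf s ^ m) 0 1.

Lemma f_cts : Cts f.
Proof. apply Bf_cts. Qed.
Lemma glo_cts : Cts glo.
Proof.
  unfold glo. apply Cts_mult. apply f_cts. apply Cts_minus. apply Cts_const.
  apply Cts_mult. apply Cts_const. apply Cts_abs, Cts_minus; auto using Cts_id, Cts_const.
Qed.

Lemma Bpos : 0 < B.
Proof. apply Beta_pos; auto. Qed.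

Lemma D_nonneg : 0 <= D.
Proof. apply IZR_le. lia. Qed.

Lemma PT_upper m T : ties_ge_prob 1 T x0 y0 (S m) * B <= Iup m.
Proof.
  unfold B. rewrite represent by auto. unfold Iup.
  apply RInt_le. lra.
  apply Cts_RInt, Cts_mult. apply Bf_cts. apply Wf_cts.
  apply Cts_RInt, Cts_mult. apply f_cts. apply Cts_pow, qf_cts.
  intros s Hs. fold d. fold f.
  pose proof (Wf_upper s T d (S m) ltac:(lra)). simpl U in H.
  rewrite qq_formula in H by lra.
  pose proof (rho_bounds s d ltac:(lra)). pose proof (pow_le (qf s) m (qf_nonneg s ltac:(lra))).
  pose proof (Bf_bounds x0 y0 s ltac:(lra)). fold f in H2.
  assert (rho s d * qf s ^ m <= 1 * qf s ^ m) by (apply Rmult_le_compat_r; [lra|]; destruct H0; lra).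
  assert (Wf s T d (S m) <= qf s ^ m) by lra.
  apply Rmult_le_compat_l; lra.
Qed.

Lemma PT_mono m T : ties_ge_prob 1 T x0 y0 (S m) <= ties_ge_prob 1 (S T) x0 y0 (S m).
Proof.
  apply Rmult_le_reg_r with B. apply Bpos.
  unfold B. rewrite !represent by auto.
  apply RInt_le. lra.
  1,2: apply Cts_RInt, Cts_mult; [apply Bf_cts| apply Wf_cts].
  intros s Hs. fold d. pose proof (Wf_mono s T d (S m) ltac:(lra)).
  pose proof (Bf_bounds x0 y0 s ltac:(lra)). apply Rmult_le_compat_l; lra.
Qed.

Lemma PT_lower m M j : (Z.abs d < Z.of_nat M)%Z ->
  ((1 - D / INR M) * (1 - 1 / INR M) ^ m) * Ilo m - (1 - (1/2) ^ (2 * M)) ^ j * B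
  <= ties_ge_prob 1 (2 * M * j) x0 y0 (S m) * B.
Proof.
  intro HdM.
  assert (HM : (1 <= M)%nat) by lia.
  assert (HMp : 0 < INR M) by (apply lt_0_INR; lia).
  assert (HM1 : 1 <= INR M) by (apply (le_INR 1); lia).
  assert (HDM : D <= INR M).
  { unfold D. rewrite INR_IZR_INZ. apply IZR_le. lia. }
  set (cM := (1 - D / INR M) * (1 - 1 / INR M) ^ m).
  set (th := (1 - (1/2) ^ (2 * M)) ^ j).
  assert (HcM : 0 <= cM).
  { unfold cM. apply Rmult_le_pos.
    - assert (D / INR M <= 1). { apply Rmult_le_reg_r with (INR M); auto. unfold Rdiv. rewrite Rmult_assoc, Rinv_l by lra. lra. } lra.
    - apply pow_le. assert (1 / INR M <= 1). { apply Rmult_le_reg_r with (INR M); auto. unfold Rdiv. rewrite Rmult_assoc, Rinv_l by lra. lra. } lra. }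
  assert (E : cM * Ilo m - th * B = RInt (fun s => (glo s * qf s ^ m) * cM - f s * th) 0 1).
  { assert (HB : B = RInt f 0 1) by (unfold B, Beta, f, Bf; reflexivity).
    unfold Ilo. rewrite HB. rewrite RInt_sub, RInt_mult_const, RInt_mult_const. req. ring.
    all: try apply Cts_RInt; auto using f_cts.
    apply Cts_mult; auto using glo_cts, Cts_pow, qf_cts.
    apply Cts_mult; auto using Cts_const. apply Cts_mult; auto using glo_cts, Cts_pow, qf_cts.
    apply Cts_mult; auto using Cts_const, f_cts. }
  rewrite E. unfold B. rewrite represent by auto. fold d.
  apply RInt_le. lra.
  apply Cts_RInt, Cts_minus; apply Cts_mult; auto using Cts_const, f_cts, glo_cts. apply Cts_mult; auto using glo_cts, Cts_pow, qf_cts.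
  apply Cts_RInt, Cts_mult; [apply Bf_cts| apply Wf_cts].
  intros s Hs. fold f.
  assert (Hs' : 0 <= s <= 1) by lra.
  pose proof (Wf_lower s M (2*M*j) d (S m) Hs' HM) as HW.
  pose proof (vv_geom s M j d Hs') as Hv. fold th in Hv.
  simpl hh in HW. unfold aa in HW. destruct (Z_lt_dec (Z.abs d) (Z.of_nat M)); [|lia].
  unfold QQ in HW. rewrite Rpow_mult_distr, qq_formula in HW by lra.
  pose proof (rho_lower s d Hs'). fold D in H.
  pose proof (rho_bounds s d Hs').
  pose proof (pow_le (qf s) m (qf_nonneg s Hs')).
  pose proof (Bf_bounds x0 y0 s Hs'). fold f in H2.
  assert (Hkey : glo s * qf s ^ m * cM <= f s * (rho s d * (1 - IZR (Z.abs d) / INR M) * ((1 - 1 / INR M) ^ m * qf s ^ m))).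
  { unfold glo, cM. fold D.
    replace (f s * (1 - 4 * D * Rabs (s - 1 / 2)) * qf s ^ m * ((1 - D / INR M) * (1 - 1 / INR M) ^ m))
      with (f s * (((1 - D / INR M) * (1 - 1 / INR M) ^ m * qf s ^ m) * (1 - 4 * D * Rabs (s - 1 / 2)))) by ring.
    replace (f s * (rho s d * (1 - D / INR M) * ((1 - 1 / INR M) ^ m * qf s ^ m)))
      with (f s * (((1 - D / INR M) * (1 - 1 / INR M) ^ m * qf s ^ m) * rho s d)) by ring.
    apply Rmult_le_compat_l; [lra|]. apply Rmult_le_compat_l; [|lra].
    apply Rmult_le_pos; auto. }
  assert (f s * (rho s d * (1 - IZR (Z.abs d) / INR M) * ((1 - 1 / INR M) ^ m * qf s ^ m)) - f s * th <= f s * Wf s (2 * M * j) d (S m)).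
  { rewrite <- Rmult_minus_distr_l. apply Rmult_le_compat_l; lra. }
  lra.
Qed.


Lemma sandwich m : Ilo m <= prob_N_ge 1 x0 y0 (S m) * B <= Iup m.
Proof.
  set (u := fun T => ties_ge_prob 1 T x0 y0 (S m)).
  assert (Hinc : forall T, u T <= u (S T)) by (intro T; apply PT_mono).
  pose proof (Lim_seq_correct u (ex_lim_seq_incr u Hinc)) as Hl.
  assert (Hub : forall T, u T <= Iup m / B).
  { intro T. pose proof (PT_upper m T). pose proof Bpos.
    apply Rmult_le_reg_r with B; auto. unfold Rdiv. rewrite Rmult_assoc, Rinv_l by lra. rewrite Rmult_1_r. exact H. }
  assert (H0T : forall T, u 0%nat <= u T).
  { induction T as [|T IH]. lra. pose proof (Hinc T). lra. }
  assert (Hprob : prob_N_ge 1 x0 y0 (S m) = real (Lim_seq u)) by reflexivity.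
  rewrite Hprob. clear Hprob.
  destruct (Lim_seq u) as [l| |] eqn:EL.
  - simpl.
    assert (HuL : forall T, u T <= l) by exact (is_lim_seq_incr_compare u l Hl Hinc).
    assert (Hlub : l <= Iup m / B).
    { pose proof (is_lim_seq_le u (fun _ => Iup m / B) l (Iup m / B) Hub Hl (is_lim_seq_const _)). exact H. }
    pose proof Bpos as HB.
    split.
    +
      assert (HA : forall M, (Z.abs d < Z.of_nat M)%Z ->
                ((1 - D / INR M) * (1 - 1 / INR M) ^ m) * Ilo m <= l * B).
      { intros M HM.
        set (cM := (1 - D / INR M) * (1 - 1 / INR M) ^ m).
        set (th := 1 - (1/2) ^ (2 * M)).
        assert (Hth : Rabs th < 1).
        { unfold th. pose proof (pow_lt (1/2) (2*M) ltac:(lra)). pose proof (pow_le1 (1/2) (2*M) ltac:(lra)).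
          rewrite Rabs_right by lra. lra. }
        assert (Hlim : is_lim_seq (fun j => cM * Ilo m - th ^ j * B) (cM * Ilo m - 0 * B)).
        { apply is_lim_seq_minus'. apply is_lim_seq_const.
          apply is_lim_seq_mult'. apply is_lim_seq_geom; auto. apply is_lim_seq_const. }
        assert (Hle : forall j, cM * Ilo m - th ^ j * B <= l * B).
        { intro j. pose proof (PT_lower m M j HM). fold cM th in H.
          pose proof (HuL (2 * M * j)%nat). unfold u in H0.
          assert (ties_ge_prob 1 (2 * M * j) x0 y0 (S m) * B <= l * B) by (apply Rmult_le_compat_r; lra).
          lra. }
        pose proof (is_lim_seq_le _ (fun _ => l * B) _ (l * B) Hle Hlim (is_lim_seq_const _)).
        simpl in H. lra. }
      set (N0 := Z.abs_nat d).
      set (ek := fun k => / INR (k + S N0)).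
      assert (Hek : is_lim_seq ek 0) by apply inv_lim_N.
      assert (Hc : is_lim_seq (fun k => ((1 - D * ek k) * (1 - 1 * ek k) ^ m) * Ilo m)
                     (((1 - D * 0) * (1 - 1 * 0) ^ m) * Ilo m)).
      { apply is_lim_seq_mult'; [|apply is_lim_seq_const].
        apply is_lim_seq_mult'.
        - apply is_lim_seq_minus'. apply is_lim_seq_const.
          apply (is_lim_seq_scal_l _ D 0) in Hek. exact Hek.
        - apply lim_pow. apply is_lim_seq_minus'. apply is_lim_seq_const.
          apply (is_lim_seq_scal_l _ 1 0) in Hek. exact Hek. }
      assert (Hle : forall k, ((1 - D * ek k) * (1 - 1 * ek k) ^ m) * Ilo m <= l * B).
      { intro k. apply HA. unfold N0. rewrite Nat2Z.inj_add, Nat2Z.inj_succ, Nat2Z.inj_abs_nat. lia. }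
      pose proof (is_lim_seq_le _ (fun _ => l * B) _ (l * B) Hle Hc (is_lim_seq_const _)).
      simpl in H. replace ((1 - D * 0) * (1 - 1 * 0) ^ m * Ilo m) with (Ilo m) in H. exact H.
      rewrite Rmult_0_r, Rmult_0_r, Rminus_0_r, pow1, !Rmult_1_l. reflexivity.
    + apply Rmult_le_reg_r with (/ B). apply Rinv_0_lt_compat; auto.
      rewrite Rmult_assoc, Rinv_r by lra. rewrite Rmult_1_r. exact Hlub.
  - exfalso. pose proof (is_lim_seq_le u (fun _ => Iup m / B) p_infty (Iup m / B) Hub Hl (is_lim_seq_const _)). exact H.
  - exfalso. pose proof (is_lim_seq_le (fun _ => u 0%nat) u (u 0%nat) m_infty H0T (is_lim_seq_const _) Hl). exact H.
Qed.

End Main.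



Theorem theorem3 (x0 y0 : nat) (hx : (1 <= x0)%nat) (hy : (1 <= y0)%nat) :
  is_lim_seq
    (fun n : nat =>
       prob_N_ge 1 x0 y0 n /
       ((1 / (2 ^ (x0 + y0 - 2) * Beta x0 y0)) * / INR n))
    1.
Proof.
  apply is_lim_seq_incr_1.
  set (B := Beta x0 y0).
  assert (HB : 0 < B) by (apply Beta_pos; auto).
  set (g0 := Bf x0 y0 (1/2)).
  set (L1 := INR ((x0 - 1) + (y0 - 1))).
  set (D := IZR (Z.abs (Z.of_nat x0 - Z.of_nat y0))).
  assert (HD : 0 <= D) by (apply IZR_le; lia).
  assert (HL1 : 0 <= L1) by apply pos_INR.
  assert (Hlipf : forall s, 0 < s < 1 -> Rabs (Bf x0 y0 s - g0) <= L1 * Rabs (s - 1/2)).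
  { intros s Hs. unfold g0, Bf, L1. apply lip; lra. }
  assert (Hup : is_lim_seq (fun m => (INR m + 1) * Iup x0 y0 m) g0).
  { unfold Iup. apply (asym _ g0 L1); auto. apply Bf_cts. }
  assert (Hlo : is_lim_seq (fun m => (INR m + 1) * Ilo x0 y0 m) g0).
  { unfold Ilo. apply (asym _ g0 (L1 + 4 * D)).
    - apply glo_cts.
    - lra.
    - intros s Hs. unfold glo.
      pose proof (Hlipf s Hs). pose proof (Bf_bounds x0 y0 s ltac:(lra)).
      pose proof (Rabs_pos (s - 1/2)).
      replace (Bf x0 y0 s * (1 - 4 * IZR (Z.abs (Z.of_nat x0 - Z.of_nat y0)) * Rabs (s - 1 / 2)) - g0)
        with ((Bf x0 y0 s - g0) + - (4 * D * Bf x0 y0 s * Rabs (s - 1/2))) by (unfold D; ring).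
      eapply Rle_trans; [apply Rabs_triang|]. rewrite Rabs_Ropp.
      rewrite (Rabs_right (4 * D * Bf x0 y0 s * Rabs (s - 1/2))).
      2: { apply Rle_ge. destruct H0. apply Rmult_le_pos; [apply Rmult_le_pos; [apply Rmult_le_pos; lra|lra]|lra]. }
      assert (4 * D * Bf x0 y0 s * Rabs (s - 1 / 2) <= 4 * D * Rabs (s - 1/2)).
      { replace (4 * D * Bf x0 y0 s * Rabs (s - 1 / 2)) with ((4 * D * Rabs (s - 1/2)) * Bf x0 y0 s) by ring.
        replace (4 * D * Rabs (s - 1 / 2)) with ((4 * D * Rabs (s - 1/2)) * 1) at 2 by ring.
        apply Rmult_le_compat_l. apply Rmult_le_pos; lra. lra. }
      lra. }
  assert (Hmid : is_lim_seq (fun m => (INR m + 1) * (prob_N_ge 1 x0 y0 (S m) * B)) g0).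
  { apply is_lim_seq_le_le with (u := fun m => (INR m + 1) * Ilo x0 y0 m) (w := fun m => (INR m + 1) * Iup x0 y0 m); auto.
    intro m. pose proof (sandwich x0 y0 hx hy m). pose proof (pos_INR m). fold B in H.
    split; apply Rmult_le_compat_l; lra. }
  set (K := (2 ^ (x0 + y0 - 2))).
  assert (HK : 0 < K) by (apply pow_lt; lra).
  assert (Hg0 : K * g0 = 1).
  { unfold K, g0, Bf. replace (x0 + y0 - 2)%nat with ((x0 - 1) + (y0 - 1))%nat by lia.
    rewrite pow_add. replace (1 - 1/2) with (1/2) by field.
    replace (2 ^ (x0 - 1) * 2 ^ (y0 - 1) * ((1 / 2) ^ (x0 - 1) * (1 / 2) ^ (y0 - 1)))
      with ((2 * (1/2)) ^ (x0 - 1) * (2 * (1/2)) ^ (y0 - 1)) by (rewrite !Rpow_mult_distr; ring).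
    replace (2 * (1/2)) with 1 by field. rewrite !pow1. ring. }
  apply (is_lim_seq_scal_l _ K g0) in Hmid. simpl in Hmid. rewrite Hg0 in Hmid.
  eapply is_lim_seq_ext; [|exact Hmid].
  intro m. fold B. fold K. rewrite S_INR.
  assert (0 < INR m + 1) by (pose proof (pos_INR m); lra).
  field. split; lra.
Qed.
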